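(* If $h:[0,\infty)\to[\frac{\beta u_0-1}{r},\frac{\beta u_0}{r}]$ is a decreasing solution to the HJB equation, then $h$ is strictly decreasing.
   Context: Fix $\mu\in\mathbb R$, $\sigma>0$, $u_0>0$, $r>0$, $\beta>0$, $d>0$. The HJB equation is $$-rh(z)-\mu h'(z)+\tfrac{\sigma^2}{2}h''(z)+\sup_{u\in[0,u_0]}\{(\beta+h'(z))u\}=\mathbf 1_{\{z>d\}}.$$ A solution to the HJB equation is a function $h:[0,\infty)\to[\frac{\beta u_0-1}{r},\frac{\beta u_0}{r}]$ that is continuously differentiable on $[0,\infty)$, twice continuously differentiable on $[0,d]$ and on $(d,\infty)$ respectively (with $h'(0),h''(0)$ the right derivatives and $h''(d)$ the left second derivative), and satisfies the HJB equation for all $z\ge0$. *)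

(* Defs.v *)
From Stdlib Require Import Reals.
From Coquelicot Require Import Coquelicot.
Open Scope R_scope.

Definition right_deriv (f : R -> R) (x l : R) : Prop :=
  filterlim (fun y => (f y - f x) / (y - x)) (at_right x) (locally l).
Definition left_deriv (f : R -> R) (x l : R) : Prop :=
  filterlim (fun y => (f y - f x) / (y - x)) (at_left x) (locally l).

Definition ind_gt (d z : R) : R := if Rlt_dec d z then 1 else 0.

Definition hjb_sup (u0 beta p : R) : Rbar :=
  Lub_Rbar (fun v => exists u, 0 <= u <= u0 /\ v = (beta + p) * u).

Definition hjb_solution (mu sigma u0 r beta d : R) (h : R -> R) : Prop :=
  exists h1 h2 : R -> R,
    (forall z, 0 <= z -> (beta * u0 - 1) / r <= h z <= beta * u0 / r) /\
    right_deriv h 0 (h1 0) /\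
    (forall z, 0 < z -> is_derive h z (h1 z)) /\
    filterlim h1 (at_right 0) (locally (h1 0)) /\
    (forall z, 0 < z -> continuous h1 z) /\
    right_deriv h1 0 (h2 0) /\
    (forall z, 0 < z < d -> is_derive h1 z (h2 z)) /\
    left_deriv h1 d (h2 d) /\
    filterlim h2 (at_right 0) (locally (h2 0)) /\
    (forall z, 0 < z < d -> continuous h2 z) /\
    filterlim h2 (at_left d) (locally (h2 d)) /\
    (forall z, d < z -> is_derive h1 z (h2 z)) /\
    (forall z, d < z -> continuous h2 z) /\
    (forall z, 0 <= z ->
       Rbar_plus (Finite (- r * h z - mu * h1 z + sigma ^ 2 / 2 * h2 z))
                 (hjb_sup u0 beta (h1 z))
       = Finite (ind_gt d z)).

(* Main.v *)
Require Import Defs.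
From Stdlib Require Import Reals Lra.
From Coquelicot Require Import Coquelicot.
Open Scope R_scope.

Definition hsv (u0 beta p : R) : R :=
  if Rle_dec 0 (beta + p) then (beta + p) * u0 else 0.

Lemma hjb_sup_val u0 beta p : 0 < u0 -> hjb_sup u0 beta p = Finite (hsv u0 beta p).
Proof.
  intros Hu. unfold hjb_sup, hsv. apply is_lub_Rbar_unique. split.
  - intros v [u [Hu1 ->]]. simpl. destruct (Rle_dec 0 (beta + p)); nra.
  - intros b Hb. destruct (Rle_dec 0 (beta + p)).
    + apply Hb. exists u0. split; [lra|reflexivity].
    + replace (Finite 0) with (Finite ((beta + p) * 0)) by (f_equal; ring).
      apply Hb. exists 0. split; [lra|reflexivity].
Qed.

Lemma deriv_right_le f z l :
  derivable_pt_lim f z l ->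
  (exists del, 0 < del /\ forall u, z < u < z + del -> f u <= f z) -> l <= 0.
Proof.
  intros Hd [del [Hdel Hf]].
  destruct (Rle_or_lt l 0) as [H|H]; auto. exfalso.
  destruct (Hd l H) as [dl Hdl].
  set (k := Rmin (dl/2) (del/2)).
  assert (Hk : 0 < k) by (unfold k; apply Rmin_glb_lt; destruct dl; simpl; lra).
  assert (Hk1 : k <= dl/2) by apply Rmin_l.
  assert (Hk2 : k <= del/2) by apply Rmin_r.
  assert (Hdl0 : 0 < dl) by (destruct dl; auto).
  specialize (Hdl k ltac:(lra)).
  assert (Habs : Rabs k < dl) by (rewrite Rabs_right; lra).
  specialize (Hdl Habs).
  specialize (Hf (z + k) ltac:(lra)).
  assert (Hq : (f (z + k) - f z) / k <= 0).
  { unfold Rdiv. apply Rmult_le_0_r; [lra|]. left; apply Rinv_0_lt_compat; lra. }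
  apply Rabs_def2 in Hdl. lra.
Qed.

Lemma deriv_left_le f z l :
  derivable_pt_lim f z l ->
  (exists del, 0 < del /\ forall u, z - del < u < z -> f u <= f z) -> 0 <= l.
Proof.
  intros Hd [del [Hdel Hf]].
  destruct (Rle_or_lt 0 l) as [H|H]; auto. exfalso.
  destruct (Hd (-l) ltac:(lra)) as [dl Hdl].
  set (k := Rmin (dl/2) (del/2)).
  assert (Hk : 0 < k) by (unfold k; apply Rmin_glb_lt; destruct dl; simpl; lra).
  assert (Hk1 : k <= dl/2) by apply Rmin_l.
  assert (Hk2 : k <= del/2) by apply Rmin_r.
  assert (Hdl0 : 0 < dl) by (destruct dl; auto).
  specialize (Hdl (-k) ltac:(lra)).
  assert (Habs : Rabs (-k) < dl) by (rewrite Rabs_Ropp, Rabs_right; lra).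
  specialize (Hdl Habs).
  specialize (Hf (z + - k) ltac:(lra)).
  assert (Hq : 0 <= (f (z + - k) - f z) / - k).
  { unfold Rdiv. replace ((f (z + - k) - f z) * / - k) with ((f z - f (z + - k)) * / k)
      by (field; lra).
    apply Rmult_le_pos; [lra|]. left; apply Rinv_0_lt_compat; lra. }
  apply Rabs_def2 in Hdl. lra.
Qed.
Lemma deriv_cont f x l : is_derive f x l -> continuity_pt f x.
Proof.
  intros H. apply continuity_pt_filterlim. apply (ex_derive_continuous (V:=R_NormedModule)). exists l; exact H.
Qed.

Lemma uniq (a b s e : R) (w w1 w2 : R -> R) :
  0 < a -> s < e -> w s = 0 -> w1 s = 0 ->
  continuity_pt w s -> continuity_pt w1 s ->
  (forall t, s < t < e -> is_derive w t (w1 t)) ->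
  (forall t, s < t < e -> is_derive w1 t (w2 t)) ->
  (forall t, s < t < e -> w2 t = a * w t + b * w1 t) ->
  (forall t u, s <= t -> t <= u -> u < e -> w t <= w u) ->
  exists z, s < z < e /\ w z = 0.
Proof.
  intros Ha Hse Hw0 Hw10 Hcw Hcw1 Dw Dw1 Ode Mon.
  set (X := exp (Rabs b)).
  assert (HX : 1 <= X).
  { unfold X. rewrite <- exp_0. destruct (Rle_lt_or_eq_dec 0 (Rabs b) (Rabs_pos b)) as [H|H].
    - left; apply exp_increasing; exact H.
    - rewrite <- H; lra. }
  set (K := a * X + 1).
  set (del := Rmin 1 (Rmin ((e - s) / 2) (1 / K))).
  assert (HK : 0 < K) by (unfold K; nra).
  assert (Hd1 : del <= 1) by apply Rmin_l.
  assert (Hd2 : del <= (e - s) / 2) by (eapply Rle_trans; [apply Rmin_r|apply Rmin_l]).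
  assert (Hd3 : del <= 1 / K) by (eapply Rle_trans; [apply Rmin_r|apply Rmin_r]).
  assert (Hd0 : 0 < del).
  { unfold del. apply Rmin_glb_lt; [lra|]. apply Rmin_glb_lt; [lra|].
    apply Rdiv_lt_0_compat; lra. }
  exists (s + del). split; [lra|].
  destruct (Req_dec (w (s + del)) 0) as [H|HM]; [exact H|exfalso].
  set (M := w (s + del)) in *.
  assert (HM0 : 0 < M).
  { assert (0 <= M) by (rewrite <- Hw0; unfold M; apply Mon; lra). lra. }
  assert (Cw : forall x, s <= x <= s + del -> continuity_pt w x).
  { intros x Hx. destruct (Req_dec x s) as [->|Hne]; auto.
    apply (deriv_cont _ _ (w1 x)). apply Dw; lra. }
  assert (Cw1 : forall x, s <= x <= s + del -> continuity_pt w1 x).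
  { intros x Hx. destruct (Req_dec x s) as [->|Hne]; auto.
    apply (deriv_cont _ _ (w2 x)). apply Dw1; lra. }
  assert (Bd : forall t, s <= t <= s + del -> w1 t <= a * M * X * del).
  { intros t Ht. destruct (Req_dec t s) as [->|Hne].
    { rewrite Hw10. assert (0 < a * M * X * del).
      { apply Rmult_lt_0_compat; [|lra]. apply Rmult_lt_0_compat; [|lra]. nra. }
      lra. }
    assert (Hst : s < t) by lra.
    destruct (MVT_gen (fun u => w1 u * exp (- b * u)) s t
                (fun u => a * w u * exp (- b * u))) as [c [Hc Heq]].
    { intros x Hx. rewrite Rmin_left in Hx by lra. rewrite Rmax_right in Hx by lra.
      assert (Hd : is_derive (fun u => w1 u * exp (- b * u)) x
                    (w2 x * exp (- b * x) + w1 x * (exp (- b * x) * (- b)))).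
      { apply (is_derive_mult w1 (fun u => exp (- b * u)) x (w2 x) (exp (- b * x) * (- b))).
        - apply Dw1; lra.
        - auto_derive; [exact I| ring].
        - intros; apply Rmult_comm. }
      replace (a * w x * exp (- b * x)) with
        (w2 x * exp (- b * x) + w1 x * (exp (- b * x) * (- b))); auto.
      rewrite Ode by lra. ring. }
    { intros x Hx. rewrite Rmin_left in Hx by lra. rewrite Rmax_right in Hx by lra.
      apply continuity_pt_mult.
      - apply Cw1; lra.
      - apply (deriv_cont _ _ (exp (- b * x) * (- b))). auto_derive; [exact I|ring]. }
    rewrite Rmin_left in Hc by lra. rewrite Rmax_right in Hc by lra.
    rewrite Hw10, Rmult_0_l, Rminus_0_r in Heq.
    assert (Hw1t : w1 t = a * w c * (t - s) * exp (b * (t - c))).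
    { replace (w1 t) with (w1 t * exp (- b * t) * exp (b * t)).
      2:{ rewrite Rmult_assoc, <- exp_plus. replace (- b * t + b * t) with 0 by ring.
          rewrite exp_0; ring. }
      rewrite Heq. replace (b * (t - c)) with (- b * c + b * t) by ring.
      rewrite exp_plus. ring. }
    rewrite Hw1t.
    assert (Hwc0 : 0 <= w c) by (rewrite <- Hw0; apply Mon; lra).
    assert (HwcM : w c <= M) by (unfold M; apply Mon; lra).
    assert (HE : exp (b * (t - c)) <= X).
    { assert (Hb1 : b * (t - c) <= Rabs b).
      { assert (0 <= t - c <= 1) by lra. pose proof (Rabs_pos b).
        destruct (Rle_or_lt 0 b).
        - rewrite Rabs_right by lra. nra.
        - rewrite Rabs_left by lra. nra. }
      unfold X. destruct (Rle_lt_or_eq_dec _ _ Hb1) as [H|H].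
      - left; apply exp_increasing; auto.
      - rewrite H; lra. }
    assert (HE0 : 0 < exp (b * (t - c))) by apply exp_pos.
    apply Rle_trans with (a * M * (t - s) * exp (b * (t - c))).
    { apply Rmult_le_compat_r; [lra|]. apply Rmult_le_compat_r; [lra|].
      apply Rmult_le_compat_l; lra. }
    replace (a * M * X * del) with (a * M * del * X) by ring.
    assert (0 < a * M) by nra.
    apply Rmult_le_compat; try nra. }
  destruct (MVT_gen w s (s + del) w1) as [c [Hc Heq]].
  { intros x Hx. rewrite Rmin_left in Hx by lra. rewrite Rmax_right in Hx by lra.
    apply Dw; lra. }
  { intros x Hx. rewrite Rmin_left in Hx by lra. rewrite Rmax_right in Hx by lra.
    apply Cw; lra. }
  rewrite Rmin_left in Hc by lra. rewrite Rmax_right in Hc by lra.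
  fold M in Heq. rewrite Hw0 in Heq. replace (s + del - s) with del in Heq by ring.
  specialize (Bd c Hc).
  assert (M <= a * M * X * del * del) by nra.
  assert (Hk : a * X * del < 1).
  { apply Rle_lt_trans with (a * X * (1 / K)).
    - apply Rmult_le_compat_l; nra.
    - unfold K. apply (Rmult_lt_reg_r (a * X + 1)); [nra|].
      field_simplify; nra. }
  assert (a * X * del * del < 1) by nra.
  nra.
Qed.

Lemma cont_eps f x : continuity_pt f x -> forall eps, 0 < eps ->
  exists del, 0 < del /\ forall y, Rabs (y - x) < del -> Rabs (f y - f x) < eps.
Proof.
  intros H eps He. destruct (H eps He) as [del [Hd Hf]]. exists del; split; auto.
  intros y Hy. destruct (Req_dec y x) as [->|Hn].
  - rewrite Rminus_diag, Rabs_R0; lra.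
  - apply Hf. split; [split; [exact I| auto] | exact Hy].
Qed.

Lemma ind1 d z : d < z -> ind_gt d z = 1.
Proof. intros; unfold ind_gt; destruct (Rlt_dec d z); lra. Qed.
Lemma ind0 d z : z <= d -> ind_gt d z = 0.
Proof. intros; unfold ind_gt; destruct (Rlt_dec d z); lra. Qed.

Lemma hsv_pos u0 beta p : - beta < p -> hsv u0 beta p = (beta + p) * u0.
Proof. intros; unfold hsv; destruct (Rle_dec 0 (beta + p)); lra. Qed.
Theorem lemma2p1 (mu sigma u0 r beta d : R) (h : R -> R) :
  0 < sigma -> 0 < u0 -> 0 < r -> 0 < beta -> 0 < d ->
  hjb_solution mu sigma u0 r beta d h ->
  (forall x y, 0 <= x -> x <= y -> h y <= h x) ->
  forall x y, 0 <= x -> x < y -> h y < h x.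
Proof.
  intros Hs Hupos Hr Hb Hd Hsol Hdec x y Hx Hxy.
  destruct Hsol as [h1 [h2 [Hbd [Rd0 [Dh [Lh1 [Ch1 [Rd1 [Dh1a [Ld1 [Lh2a [Ch2a [Lh2d [Dh1b [Ch2b HJ]]]]]]]]]]]]]]].
  set (c0 := beta * u0 / r). set (L := (beta * u0 - 1) / r).
  assert (Hs2 : 0 < sigma ^ 2 / 2) by (apply Rdiv_lt_0_compat; [apply pow_lt|]; lra).
  assert (HJB : forall z, 0 <= z ->
    - r * h z - mu * h1 z + sigma ^ 2 / 2 * h2 z + hsv u0 beta (h1 z) = ind_gt d z).
  { intros z Hz. specialize (HJ z Hz). rewrite hjb_sup_val in HJ by lra. simpl in HJ.
    injection HJ; auto. }
  assert (Hneg : forall z, 0 < z -> h1 z <= 0).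
  { intros z Hz. apply (deriv_right_le h z); [apply is_derive_Reals, Dh; lra|].
    exists 1; split; [lra|]. intros; apply Hdec; lra. }
  assert (Hsv0 : hsv u0 beta 0 = beta * u0) by (rewrite hsv_pos by lra; ring).
  assert (Cth : forall z, 0 < z -> continuity_pt h z).
  { intros z Hz. apply (deriv_cont _ _ (h1 z)). apply Dh; lra. }
  assert (Cth1 : forall z, 0 < z -> continuity_pt h1 z).
  { intros z Hz. apply continuity_pt_filterlim. apply Ch1; lra. }
  assert (Flat : forall al be c t, 0 <= al -> al < t < be -> t <> d ->
            (forall u, al < u < be -> h u = c) -> - r * c + beta * u0 = ind_gt d t).
  { intros al be c t Hal Ht Htd Hc.
    assert (H1z : forall u, al < u < be -> h1 u = 0).
    { intros u Hu0.
      assert (D0 : is_derive h u 0).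
      { apply (is_derive_ext_loc (fun _ => c)).
        - apply (locally_interval _ u al be); simpl; try lra.
          intros y0 Hy1 Hy2. symmetry; apply Hc; simpl in *; lra.
        - exact (is_derive_const c u). }
      rewrite <- (is_derive_unique h u _ (Dh u ltac:(lra))).
      apply is_derive_unique; exact D0. }
    assert (D0 : is_derive h1 t 0).
    { apply (is_derive_ext_loc (fun _ => 0)).
      - apply (locally_interval _ t al be); simpl; try lra.
        intros y0 Hy1 Hy2. symmetry; apply H1z; simpl in *; lra.
      - exact (is_derive_const 0 t). }
    assert (H2t : h2 t = 0).
    { assert (D2 : is_derive h1 t (h2 t)).
      { destruct (Rlt_or_le t d). apply Dh1a; lra. apply Dh1b; lra. }
      rewrite <- (is_derive_unique h1 t _ D2). apply is_derive_unique; exact D0. }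
    specialize (HJB t ltac:(lra)). rewrite H2t, (H1z t ltac:(lra)), (Hc t ltac:(lra)), Hsv0 in HJB.
    rewrite <- HJB. ring. }
  assert (Scase : (exists z, 0 < z /\ h z = c0) -> False).
  { intros [z1 [Hz1 Hhz1]].
    assert (DC : forall t u, 0 <= u <= t -> h t = c0 -> h u = c0).
    { intros t u Hut Ht. assert (h u <= c0) by (apply Hbd; lra).
      assert (h t <= h u) by (apply Hdec; lra). lra. }
    assert (Hrc : - r * c0 + beta * u0 = 0) by (unfold c0; field; lra).
    assert (NoBig : forall t, 0 <= t -> h t = c0 -> t <= d).
    { intros t Ht Hht. destruct (Rle_or_lt t d); auto. exfalso.
      assert (E := Flat d t c0 ((d + t) / 2) ltac:(lra) ltac:(lra) ltac:(lra)
                    (fun u Hu => DC t u ltac:(lra) Hht)).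
      rewrite ind1 in E by lra. lra. }
    destruct (completeness (fun t => 0 <= t /\ h t = c0)) as [s [Hub Hlub]].
    { exists d. intros t [Ht1 Ht2]. apply NoBig; auto. }
    { exists z1; split; [lra|auto]. }
    assert (Hsz : z1 <= s) by (apply Hub; split; [lra|auto]).
    assert (Hsd : s <= d) by (apply Hlub; intros t [Ht1 Ht2]; apply NoBig; auto).
    assert (Hhs : h s = c0).
    { assert (Hle : h s <= c0) by (apply Hbd; lra).
      destruct (Rle_lt_or_eq_dec _ _ Hle) as [Hlt|]; auto. exfalso.
      destruct (cont_eps h s (Cth s ltac:(lra)) (c0 - h s) ltac:(lra)) as [del [Hdel Hc]].
      destruct (Classical_Prop.classic (exists t, (0 <= t /\ h t = c0) /\ s - del < t)) as [[t [[Ht1 Ht2] Ht3]]|Hn].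
      - assert (t <= s) by (apply Hub; auto).
        specialize (Hc t ltac:(rewrite Rabs_left1 by lra; lra)).
        rewrite Ht2 in Hc. rewrite Rabs_right in Hc by lra. lra.
      - assert (s <= s - del); [|lra].
        apply Hlub. intros t Ht. destruct (Rle_or_lt t (s - del)); auto.
        exfalso; apply Hn; exists t; auto. }
    assert (Hh1s : h1 s = 0).
    { assert (h1 s <= 0) by (apply Hneg; lra).
      assert (0 <= h1 s); [|lra].
      apply (deriv_left_le h s); [apply is_derive_Reals, Dh; lra|].
      exists s; split; [lra|]. intros u Hu. rewrite Hhs. apply Hbd; lra. }
    destruct (Rle_lt_or_eq_dec _ _ Hsd) as [Hlt|Heqd].
    -
      destruct (cont_eps h1 s (Cth1 s ltac:(lra)) beta Hb) as [del [Hdel Hc]].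
      rewrite Hh1s in Hc.
      set (e := Rmin d (s + del)).
      assert (He1 : e <= d) by apply Rmin_l.
      assert (He2 : e <= s + del) by apply Rmin_r.
      assert (He3 : s < e) by (apply Rmin_glb_lt; lra).
      destruct (uniq (2 * r / sigma ^ 2) (2 * (mu - u0) / sigma ^ 2) s e
                  (fun t => c0 - h t) (fun t => - h1 t) (fun t => - h2 t)) as [z [Hz Hwz]].
      + apply Rdiv_lt_0_compat; [lra|apply pow_lt; lra].
      + exact He3.
      + cbv beta. rewrite Hhs; ring.
      + cbv beta. rewrite Hh1s; ring.
      + apply continuity_pt_minus; [apply continuity_pt_const; intros ? ?; reflexivity|].
        apply Cth; lra.
      + apply continuity_pt_opp. apply Cth1; lra.
      + intros t Ht. auto_derive.
        * exists (h1 t); apply Dh; lra.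
        * replace (Derive (fun x0 : R => h x0) t) with (h1 t) by (symmetry; apply is_derive_unique; apply Dh; lra). ring.
      + intros t Ht. auto_derive.
        * exists (h2 t); apply Dh1a; lra.
        * replace (Derive (fun x0 : R => h1 x0) t) with (h2 t) by (symmetry; apply is_derive_unique; apply Dh1a; lra). ring.
      + intros t Ht. cbv beta.
        specialize (HJB t ltac:(lra)). rewrite ind0 in HJB by lra.
        assert (Hb1 : Rabs (h1 t - 0) < beta) by (apply Hc; rewrite Rabs_right; lra).
        rewrite Rminus_0_r in Hb1. apply Rabs_def2 in Hb1.
        rewrite hsv_pos in HJB by lra.
        assert (Hh2 : h2 t = 2 / sigma ^ 2 * (r * h t + mu * h1 t - (beta + h1 t) * u0)).
        { apply (Rmult_eq_reg_l (sigma ^ 2 / 2)); [|lra].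
          replace (sigma ^ 2 / 2 * (2 / sigma ^ 2 * (r * h t + mu * h1 t - (beta + h1 t) * u0)))
            with (r * h t + mu * h1 t - (beta + h1 t) * u0) by (field; lra). lra. }
        rewrite Hh2. unfold c0. field. lra.
      + intros t u Ht Htu Hu. cbv beta. assert (h u <= h t) by (apply Hdec; lra). lra.
      + assert (z <= s); [|lra]. apply Hub. split; [lra|]. lra.
    -
      rewrite Heqd in Hhs, Hh1s.
      set (eps1 := 1 / (4 * r)).
      set (A := Rabs (mu - u0)).
      set (eps2 := Rmin beta (1 / (4 * (A + 1)))).
      assert (HA : 0 <= A) by apply Rabs_pos.
      assert (He1 : 0 < eps1) by (unfold eps1; apply Rdiv_lt_0_compat; lra).
      assert (He2 : 0 < eps2) by (apply Rmin_glb_lt; [lra|apply Rdiv_lt_0_compat; lra]).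
      assert (He2b : eps2 <= beta) by apply Rmin_l.
      assert (He2c : eps2 * (4 * (A + 1)) <= 1).
      { assert (eps2 <= 1 / (4 * (A + 1))) by apply Rmin_r.
        apply Rmult_le_reg_r with (/ (4 * (A + 1))).
        - apply Rinv_0_lt_compat; lra.
        - rewrite Rmult_assoc, Rinv_r by lra. unfold Rdiv in H. lra. }
      destruct (cont_eps h d (Cth d Hd) eps1 He1) as [del1 [Hdel1 Hc1]].
      destruct (cont_eps h1 d (Cth1 d Hd) eps2 He2) as [del2 [Hdel2 Hc2]].
      set (z := d + Rmin del1 del2 / 2).
      assert (Hm : 0 < Rmin del1 del2) by (apply Rmin_glb_lt; lra).
      assert (Hm1 : Rmin del1 del2 <= del1) by apply Rmin_l.
      assert (Hm2 : Rmin del1 del2 <= del2) by apply Rmin_r.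
      assert (Pos : forall u, d < u <= z -> 0 < h2 u).
      { intros u Hu0.
        specialize (Hc1 u ltac:(rewrite Rabs_right; unfold z in *; lra)).
        specialize (Hc2 u ltac:(rewrite Rabs_right; unfold z in *; lra)).
        rewrite Hhs in Hc1. rewrite Hh1s, Rminus_0_r in Hc2.
        apply Rabs_def2 in Hc1. 
        specialize (HJB u ltac:(lra)). rewrite ind1 in HJB by lra.
        assert (Hq : Rabs (h1 u) <= eps2) by lra.
        apply Rabs_def2 in Hc2.
        rewrite hsv_pos in HJB by lra.
        assert (Hp : Rabs ((mu - u0) * h1 u) < 1 / 4).
        { rewrite Rabs_mult. fold A.
          apply Rle_lt_trans with (A * eps2).
          - apply Rmult_le_compat_l; lra.
          - nra. }
        apply Rabs_def2 in Hp.
        assert (Hr1 : r * (h u - c0) > - (1/4)).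
        { unfold eps1 in Hc1. assert (r * (c0 - h u) < r * (1 / (4 * r))) by (apply Rmult_lt_compat_l; lra).
          replace (r * (1 / (4 * r))) with (1/4) in H by (field; lra). lra. }
        assert (Hrc0 : r * c0 = beta * u0) by (unfold c0; field; lra).
        assert (sigma ^ 2 / 2 * h2 u > 0) by nra.
        nra. }
      destruct (MVT_gen h1 d z (fun u => if Rle_dec u d then 1 else h2 u)) as [c [Hc Heq]].
      { intros x0 Hx0. rewrite Rmin_left in Hx0 by (unfold z; lra).
        rewrite Rmax_right in Hx0 by (unfold z; lra).
        destruct (Rle_dec x0 d); [lra|]. apply Dh1b; lra. }
      { intros x0 Hx0. rewrite Rmin_left in Hx0 by (unfold z; lra).
        rewrite Rmax_right in Hx0 by (unfold z; lra). apply Cth1; lra. }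
      rewrite Rmin_left in Hc by (unfold z; lra).
      rewrite Rmax_right in Hc by (unfold z; lra).
      assert (Hdf : 0 < (if Rle_dec c d then 1 else h2 c)).
      { destruct (Rle_dec c d); [lra|]. apply Pos; lra. }
      assert (h1 z <= 0) by (apply Hneg; unfold z; lra).
      assert (0 < z - d) by (unfold z; lra).
      rewrite Hh1s in Heq. nra. }
  assert (Qcase : (exists z, 0 < z /\ h z = L) -> False).
  { intros [z1 [Hz1 Hhz1]].
    assert (UC : forall t u, 0 <= t <= u -> h t = L -> h u = L).
    { intros t u Hut Ht. assert (L <= h u) by (apply Hbd; lra).
      assert (h u <= h t) by (apply Hdec; lra). lra. }
    assert (HrL : - r * L + beta * u0 = 1) by (unfold L; field; lra).
    assert (NoSmall : forall t, 0 <= t -> h t = L -> d <= t).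
    { intros t Ht Hht. destruct (Rle_or_lt d t); auto. exfalso.
      assert (E := Flat t d L ((t + d) / 2) ltac:(lra) ltac:(lra) ltac:(lra)
                    (fun u Hu => UC t u ltac:(lra) Hht)).
      rewrite ind0 in E by lra. lra. }
    destruct (completeness (fun x => 0 <= - x /\ h (- x) = L)) as [m [Hub Hlub]].
    { exists (- d). intros x0 [Hx1 Hx2]. assert (d <= - x0) by (apply NoSmall; auto). lra. }
    { exists (- z1); rewrite Ropp_involutive; split; [lra|auto]. }
    set (q := - m).
    assert (Hqz : q <= z1).
    { assert (- z1 <= m); [|unfold q; lra]. apply Hub. rewrite Ropp_involutive; split; [lra|auto]. }
    assert (Hqd : d <= q).
    { assert (m <= - d); [|unfold q; lra]. apply Hlub. intros x0 [Hx1 Hx2].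
      assert (d <= - x0) by (apply NoSmall; auto). lra. }
    assert (Hlow : forall t, 0 <= t -> h t = L -> q <= t).
    { intros t Ht Hht. assert (- t <= m); [|unfold q; lra]. apply Hub.
      rewrite Ropp_involutive; auto. }
    assert (Hhq : h q = L).
    { assert (Hle : L <= h q) by (apply Hbd; lra).
      destruct (Rle_lt_or_eq_dec _ _ Hle) as [Hlt|]; auto. exfalso.
      destruct (cont_eps h q (Cth q ltac:(lra)) (h q - L) ltac:(lra)) as [del [Hdel Hc]].
      destruct (Classical_Prop.classic (exists x0, (0 <= - x0 /\ h (- x0) = L) /\ m - del < x0)) as [[x0 [[Ht1 Ht2] Ht3]]|Hn].
      - assert (x0 <= m) by (apply Hub; auto).
        specialize (Hc (- x0) ltac:(rewrite Rabs_right by (unfold q; lra); unfold q; lra)).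
        rewrite Ht2 in Hc. rewrite Rabs_left in Hc by lra. lra.
      - assert (m <= m - del); [|lra].
        apply Hlub. intros t Ht. destruct (Rle_or_lt t (m - del)); auto.
        exfalso; apply Hn; exists t; auto. }
    assert (Hh1q : h1 q = 0).
    { assert (h1 q <= 0) by (apply Hneg; lra).
      assert (- h1 q <= 0); [|lra].
      apply (deriv_right_le (fun t => - h t) q).
      { apply (derivable_pt_lim_opp h q (h1 q)). apply is_derive_Reals, Dh; lra. }
      exists 1; split; [lra|]. intros u Hu0. rewrite (UC q u ltac:(lra) Hhq), Hhq. lra. }
    destruct (Rle_lt_or_eq_dec _ _ Hqd) as [Hlt|Heqd].
    -
      destruct (cont_eps h1 q (Cth1 q ltac:(lra)) beta Hb) as [del [Hdel Hc]].
      rewrite Hh1q in Hc.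
      set (e := Rmin (q - d) del).
      assert (He1 : e <= q - d) by apply Rmin_l.
      assert (He2 : e <= del) by apply Rmin_r.
      assert (He3 : 0 < e) by (apply Rmin_glb_lt; lra).
      destruct (uniq (2 * r / sigma ^ 2) (- (2 * (mu - u0) / sigma ^ 2)) q (q + e)
                  (fun t => h (2 * q - t) - L) (fun t => - h1 (2 * q - t))
                  (fun t => h2 (2 * q - t))) as [z [Hz Hwz]].
      + apply Rdiv_lt_0_compat; [lra|apply pow_lt; lra].
      + lra.
      + cbv beta. replace (2 * q - q) with q by ring. rewrite Hhq; ring.
      + cbv beta. replace (2 * q - q) with q by ring. rewrite Hh1q; ring.
      + apply (deriv_cont _ _ (- h1 (2 * q - q))). auto_derive.
        * exists (h1 (2 * q - q)); apply Dh; lra.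
        * replace (Derive (fun x0 : R => h x0) (2 * q + - q)) with (h1 (2 * q - q))
            by (symmetry; apply is_derive_unique; apply Dh; lra). ring.
      + apply (deriv_cont _ _ (h2 (2 * q - q))). auto_derive.
        * exists (h2 (2 * q - q)); apply Dh1b; lra.
        * replace (Derive (fun x0 : R => h1 x0) (2 * q + - q)) with (h2 (2 * q - q))
            by (symmetry; apply is_derive_unique; apply Dh1b; lra). ring.
      + intros t Ht. auto_derive.
        * exists (h1 (2 * q - t)); apply Dh; lra.
        * replace (Derive (fun x0 : R => h x0) (2 * q + - t)) with (h1 (2 * q - t))
            by (symmetry; apply is_derive_unique; apply Dh; lra). ring.
      + intros t Ht. auto_derive.
        * exists (h2 (2 * q - t)); apply Dh1b; lra.
        * replace (Derive (fun x0 : R => h1 x0) (2 * q + - t)) with (h2 (2 * q - t))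
            by (symmetry; apply is_derive_unique; apply Dh1b; lra). ring.
      + intros t Ht. cbv beta. set (zz := 2 * q - t).
        assert (Hzz : d < zz < q) by (unfold zz; lra).
        specialize (HJB zz ltac:(lra)). rewrite ind1 in HJB by lra.
        assert (Hb1 : Rabs (h1 zz - 0) < beta) by (apply Hc; rewrite Rabs_left; unfold zz in *; lra).
        rewrite Rminus_0_r in Hb1. apply Rabs_def2 in Hb1.
        rewrite hsv_pos in HJB by lra.
        assert (Hh2 : h2 zz = 2 / sigma ^ 2 * (1 + r * h zz + mu * h1 zz - (beta + h1 zz) * u0)).
        { apply (Rmult_eq_reg_l (sigma ^ 2 / 2)); [|lra].
          replace (sigma ^ 2 / 2 * (2 / sigma ^ 2 * (1 + r * h zz + mu * h1 zz - (beta + h1 zz) * u0)))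
            with (1 + r * h zz + mu * h1 zz - (beta + h1 zz) * u0) by (field; lra). lra. }
        rewrite Hh2. unfold L. field. lra.
      + intros t u Ht Htu Hu0. cbv beta.
        assert (h (2 * q - u) >= h (2 * q - t)) by (apply Rle_ge, Hdec; lra). lra.
      + assert (q <= 2 * q - z); [|lra]. apply Hlow; lra.
    -
      rewrite <- Heqd in Hhq, Hh1q.
      assert (Hh2d : h2 d < 0).
      { specialize (HJB d ltac:(lra)). rewrite ind0 in HJB by lra.
        rewrite Hhq, Hh1q, Hsv0 in HJB.
        assert (E1 : sigma ^ 2 / 2 * h2 d = r * L - beta * u0) by nra. assert (E2 : r * L - beta * u0 = -1) by (unfold L; field; lra).
        nra. }
      assert (Hep : 0 < - h2 d / 2) by lra.
      apply (proj1 (filterlim_locally _ _)) with (eps := mkposreal _ Hep) in Ld1.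
      destruct Ld1 as [del Hdl].
      set (yy := d - Rmin del d / 2).
      assert (Hm : 0 < Rmin del d) by (apply Rmin_glb_lt; [apply cond_pos|lra]).
      assert (Hm1 : Rmin del d <= del) by apply Rmin_l.
      assert (Hm2 : Rmin del d <= d) by apply Rmin_r.
      assert (Hyy : ball d del yy).
      { unfold ball; simpl; unfold AbsRing_ball; simpl; unfold abs, minus, plus, opp; simpl.
        rewrite Rabs_left; unfold yy; lra. }
      specialize (Hdl yy Hyy ltac:(unfold yy; lra)).
      revert Hdl. unfold ball; simpl; unfold AbsRing_ball; simpl; unfold abs, minus, plus, opp; simpl.
      intro Hdl. apply Rabs_def2 in Hdl.
      rewrite Hh1q, Rminus_0_r in Hdl.
      assert (Hy1 : h1 yy <= 0) by (apply Hneg; unfold yy; lra).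
      assert (Hy2 : yy - d < 0) by (unfold yy; lra).
      assert (0 <= h1 yy / (yy - d)).
      { unfold Rdiv. assert (/ (yy - d) < 0) by (apply Rinv_lt_0_compat; lra). nra. }
      lra. }
  apply Rnot_le_lt. intro Hge.
  assert (Heq : h y = h x) by (apply Rle_antisym; auto; apply Hdec; lra).
  assert (Hcst : forall u, x < u < y -> h u = h x).
  { intros u Hu0. assert (h u <= h x) by (apply Hdec; lra).
    assert (h y <= h u) by (apply Hdec; lra). lra. }
  assert (Gc0 : forall t, x < t < y -> t < d -> False).
  { intros t Ht Htd. apply Scase. exists t. split; [lra|].
    assert (E := Flat x y (h x) t Hx Ht ltac:(lra) Hcst).
    rewrite ind0 in E by lra. rewrite Hcst by lra. unfold c0.
    apply (Rmult_eq_reg_l r); [|lra]. field_simplify; lra. }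
  assert (GL : forall t, x < t < y -> d < t -> False).
  { intros t Ht Htd. apply Qcase. exists t. split; [lra|].
    assert (E := Flat x y (h x) t Hx Ht ltac:(lra) Hcst).
    rewrite ind1 in E by lra. rewrite Hcst by lra. unfold L.
    apply (Rmult_eq_reg_l r); [|lra]. field_simplify; lra. }
  destruct (Req_dec ((x + y) / 2) d) as [Em|Em].
  - apply (GL (((x + y) / 2 + y) / 2)); lra.
  - destruct (Rlt_or_le ((x + y) / 2) d).
    + apply (Gc0 ((x + y) / 2)); lra.
    + apply (GL ((x + y) / 2)); lra.
Qed.
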